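(* For every instance $(A,C,k)$ there exist committees $W$ and $W'$, each with representation ratio at least $\frac34$, such that $W$ satisfies EJR+ and $W'$ satisfies FJR.
   Context: An instance $(A,C,k)$ consists of a finite nonempty candidate set $C$, voters $N=\{1,\dots,n\}$, approval sets $A_i\subseteq C$, and a committee size $1\le k\le|C|$. A committee is $W\subseteq C$ with $|W|\le k$. $\mathrm{cov}(W)=|\{i: A_i\cap W\ne\emptyset\}|$; the representation ratio is $\mathrm{cov}(W)/\max\{\mathrm{cov}(W'):|W'|=k\}$. $W$ satisfies EJR+ if for every $\ell\in\{1,\dots,k\}$ and every $N'\subseteq N$ with $|N'|\ge\ell n/k$ and $\bigcap_{i\in N'}A_i\ne\emptyset$, either some $i\in N'$ has $|A_i\cap W|\ge\ell$ or $\bigcap_{i\in N'}A_i\subseteq W$. (Fully justified representation) For a positive integer $\beta$ and $T\subseteq C$, a group $S\subseteq N$ is weakly $(\beta,T)$-cohesive if $|S|\ge |T|\frac{n}{k}$ and $|A_i\cap T|\ge\beta$ for all $i\in S$; $W$ satisfies FJR if for every such $\beta,T$ and every weakly $(\beta,T)$-cohesive group $S$ there is $i\in S$ with $|A_i\cap W|\ge\beta$. *)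

(* Defs.v *)
From mathcomp Require Import all_boot.
Set Implicit Arguments. Unset Strict Implicit. Unset Printing Implicit Defensive.

Section Voting.
Variables (C : finType) (n : nat) (A : 'I_n -> {set C}) (k : nat).

Definition cov (W : {set C}) : nat := #|[set i : 'I_n | A i :&: W != set0]|.

Definition maxcov : nat := \max_(W : {set C} | #|W| == k) cov W.

(* representation ratio cov(W)/maxcov >= 3/4, written without division *)
Definition ratio_ge_3_4 (W : {set C}) : Prop := 3 * maxcov <= 4 * cov W.

Definition common (N' : {set 'I_n}) : {set C} :=
  [set c | [forall i in N', c \in A i]].

(* EJR+ ; |N'| >= l n / k  is written  |N'| * k >= l * n *)
Definition EJRplus (W : {set C}) : Prop :=
  forall (l : nat) (N' : {set 'I_n}),
    1 <= l <= k -> l * n <= #|N'| * k -> common N' != set0 ->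
    (exists2 i, i \in N' & l <= #|A i :&: W|) \/ common N' \subset W.

Definition weakly_cohesive (beta : nat) (T : {set C}) (S : {set 'I_n}) : Prop :=
  S != set0 /\ #|T| * n <= #|S| * k /\ (forall i, i \in S -> beta <= #|A i :&: T|).

Definition FJR (W : {set C}) : Prop :=
  forall (beta : nat) (T : {set C}) (S : {set 'I_n}),
    0 < beta -> weakly_cohesive beta T S ->
    exists2 i, i \in S & beta <= #|A i :&: W|.

End Voting.

(* Main.v *)
Require Import Defs.
From mathcomp Require Import all_boot zify.
From Stdlib Require Import Classical.
Set Implicit Arguments. Unset Strict Implicit. Unset Printing Implicit Defensive.


Lemma subset_select (T : finType) (w : T -> nat) (X : {set T}) (j : nat) :
  j <= #|X| -> exists S : {set T}, [/\ S \subset X, #|S| = j &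
     j * \sum_(o in X) w o <= #|X| * \sum_(o in S) w o].
Proof.
move=> hj.
have [d hd] : exists d, d = #|X| - j by eexists.
elim: d j hj hd => [|d IH] j hj hd.
  have -> : j = #|X| by lia.
  by exists X; split.
have [S [sSX cS hS]] : exists S : {set T}, [/\ S \subset X, #|S| = j.+1 & j.+1 * \sum_(o in X) w o <= #|X| * \sum_(o in S) w o] by apply: IH; lia.
have S0 : 0 < #|S| by rewrite cS.
move: S0; rewrite card_gt0 => /set0Pn [o0 o0S].
pose o := [arg min_(o < o0 in S) w o].
have oS : o \in S by rewrite /o; case: arg_minnP.
have omin : forall o', o' \in S -> w o <= w o'.
  by rewrite /o; case: arg_minnP.
exists (S :\ o); split.
- by apply: subset_trans sSX; apply: subsetDl.
- by move: (cardsD1 o S); rewrite oS cS; lia.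
have e : \sum_(o' in S) w o' = w o + \sum_(o' in S :\ o) w o'.
  rewrite (bigD1 o) //=; congr (_ + _); apply: eq_bigl => x.
  by rewrite !inE andbC.
have hm : #|S| * w o <= \sum_(o' in S) w o'.
  rewrite -sum_nat_const; exact: leq_sum.
rewrite cS in hm.
set a := \sum_(o' in X) w o' in hS *.
set b := \sum_(o' in S :\ o) w o' in e *.
rewrite e in hS hm.
nia.
Qed.

Section Ext.
Variables (C : finType) (n : nat) (A : 'I_n -> {set C}) (k : nat).

Definition covset (W : {set C}) := [set i : 'I_n | A i :&: W != set0].

Lemma covE (W : {set C}) : cov A W = #|covset W|. Proof. by []. Qed.

Lemma covset_mono (W W' : {set C}) : W \subset W' -> covset W \subset covset W'.
Proof.
move=> sW; apply/subsetP => i; rewrite !inE -!card_gt0 => h.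
apply: leq_trans h _; apply: subset_leq_card; exact: setIS.
Qed.

Lemma cov_mono (W W' : {set C}) : W \subset W' -> cov A W <= cov A W'.
Proof. by move=> sW; rewrite !covE; apply: subset_leq_card; apply: covset_mono. Qed.

Lemma cov_le_n (W : {set C}) : cov A W <= n.
Proof. by rewrite covE; apply: leq_trans (max_card _) _; rewrite card_ord. Qed.

Lemma card_sum (G : {set 'I_n}) (b : 'I_n -> bool) :
  #|[set i in G | b i]| = \sum_(i in G) (b i : nat).
Proof.
rewrite -sum1_card (eq_bigl (fun i => (i \in G) && b i)); last by move=> i; rewrite inE.
rewrite big_mkcondr /=; apply: eq_bigr => i _; by case: (b i).
Qed.

Lemma opt_sum (opt : option C) (X : {set C}) :
  \sum_(o in X) ((opt == Some o) : nat) = ((if opt is Some c then c \in X else false) : nat).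
Proof.
case: opt => [c|]; last by rewrite big1.
case cX: (c \in X).
  rewrite (bigD1 c) //= eqxx big1 // => o /andP [_ oc].
  by rewrite (inj_eq (@Some_inj _)) eq_sym (negbTE oc).
rewrite big1 // => o oX; rewrite (inj_eq (@Some_inj _)).
by case: eqP => // -[ec]; move: cX; rewrite ec oX.
Qed.

Lemma extend (W0 : {set C}) : 0 < n -> 1 <= k <= #|C| ->
  n * #|W0| <= k * cov A W0 ->
  exists W : {set C}, [/\ W0 \subset W, #|W| <= k & ratio_ge_3_4 A k W].
Proof.
move=> n0 /andP [k1 kC] hW0.
have sk : #|W0| <= k.
  have := cov_le_n W0; nia.
have hkT : k <= #|[set: C]| by rewrite cardsT.
have [O0 [_ cO0 _]] := @subset_select C (fun _ => 0) setT k hkT.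
have hpos : 0 < #|(fun W : {set C} => #|W| == k)|.
  rewrite lt0n; apply/eqP => /card0_eq H.
  by move: (H O0); rewrite unfold_in /= cO0 eqxx.
have [O] := @eq_bigmax_cond _ (fun W : {set C} => #|W| == k) (cov A) hpos.
rewrite unfold_in /= => /eqP cO hmax.
have {}hmax : maxcov A k = cov A O by rewrite -hmax.
pose G := [set i | (A i :&: O != set0) && (A i :&: W0 == set0)].
pose p i := [pick c in A i :&: O].
pose q (i : 'I_n) (X : {set C}) := (if p i is Some c then c \in X else false).
pose w o := #|[set i in G | p i == Some o]|.
have wsum : forall X : {set C}, \sum_(o in X) w o = #|[set i in G | q i X]|.
  move=> X; rewrite card_sum.
  under eq_bigr do rewrite /w card_sum.
  rewrite exchange_big /=; apply: eq_bigr => i _; by rewrite (opt_sum (p i) X) /q; case: (p i).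
have wO : \sum_(o in O) w o = #|G|.
  rewrite wsum; apply: eq_card => i; rewrite !inE.
  case/boolP: (A i :&: O != set0) => //= ne; case: (A i :&: W0 == set0) => //=.
  rewrite /q /p; case: pickP => [c|]; first by rewrite inE => /andP [].
  by move=> H; move: ne => /set0Pn [c]; rewrite H.
have covO : cov A O <= cov A W0 + #|G|.
  rewrite !covE; apply: leq_trans (leq_card_setU _ _); apply: subset_leq_card.
  apply/subsetP => i; rewrite !inE => h; by case: (A i :&: W0 == set0); rewrite /= ?h.
have hkO : k - #|W0| <= #|O| by rewrite cO; lia.
have [S [sSO cS hS]] := @subset_select C w O (k - #|W0|) hkO.
have disj : covset W0 :&: [set i in G | q i S] = set0.
  apply/setP => i; rewrite !inE; case: (A i :&: W0 == set0) => //=; by rewrite andbF.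
have covW : cov A W0 + \sum_(o in S) w o <= cov A (W0 :|: S).
  have e := cardsUI (covset W0) [set i in G | q i S].
  rewrite disj cards0 addn0 in e.
  rewrite wsum !covE -e; apply: subset_leq_card; apply/subsetP => i; rewrite !inE.
  case/orP => [h|/andP [iG]].
    apply: contraNneq h => /setP H; apply/eqP/setP => c; move: (H c); rewrite !inE.
    by case: (c \in A i); case: (c \in W0); rewrite ?orbT.
  rewrite /q /p; case: pickP => // c; rewrite !inE => /andP [cA _] cS'.
  by apply/set0Pn; exists c; rewrite !inE cA cS' orbT.
exists (W0 :|: S). split.
- exact: subsetUl.
- apply: leq_trans (leq_card_setU _ _) _; lia.
rewrite /ratio_ge_3_4 hmax.
rewrite cO wO in hS.
have := cov_le_n O.
set x := cov A W0 in hW0 covO covW *.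
set g := #|G| in hS covO *.
set y := \sum_(o in S) w o in hS covW *.
set z := cov A (W0 :|: S) in covW *.
set o := cov A O in covO *.
set s := #|W0| in hW0 sk hS *.
move=> oN.
have [r kr] : exists r, k = s + r by exists (k - s); lia.
rewrite kr addKn in hS.
rewrite kr in hW0.
case: (leqP o x) => ox.
  lia.
have h1 : (s + r) * z >= s * x + r * o.
  have : r * (o - x) <= r * g by apply: leq_mul => //; lia.
  nia.
have h2 : (s + r) * x >= s * o by nia.
have h3 : (s + r) * ((s + r) * z) >= s * s * o + (s + r) * r * o.
  have h5 := leq_mul (leqnn s) h2.
  have h6 := leq_mul (leqnn (s + r)) h1.
  nia.
have h4 : 3 * ((s + r) * (s + r)) * o <= 4 * (s * s * o + (s + r) * r * o).
  have : 3 * ((s + r) * (s + r)) <= 4 * (s * s + (s + r) * r).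
    case: (leqP s r) => sr.
      have [d ->] : exists d, r = s + d by exists (r - s); lia.
      nia.
    have [d ->] : exists d, s = r + d by exists (s - r); lia.
    nia.
  nia.
have k0 : 0 < (s + r) * (s + r) by rewrite -kr muln_gt0 k1.
have : ((s + r) * (s + r)) * (3 * o) <= ((s + r) * (s + r)) * (4 * z) by nia.
by rewrite leq_pmul2l.
Qed.

End Ext.

Section EJR.
Variables (C : finType) (n : nat) (A : 'I_n -> {set C}) (k : nat).

Definition cert (W : {set C}) (lev : C -> nat) (grp : C -> {set 'I_n}) :=
  (forall c, c \in W -> [/\ 0 < lev c, lev c <= k, lev c * n <= #|grp c| * k &
                           forall i, i \in grp c -> c \in A i]) /\
  (forall i c, c \in W -> i \in grp c -> #|[set c' in W | i \in grp c']| <= lev c).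

Lemma cert_bound W lev grp : cert W lev grp -> n * #|W| <= k * cov A W.
Proof.
move=> [ha hb].
pose L := k`!.
pose qq c := L %/ lev c.
have L0 : 0 < L by apply: fact_gt0.
have hc : forall c, c \in W -> n * L <= k * (#|grp c| * qq c).
  move=> c cW; have [l0 lk hl _] := ha c cW.
  have dv : lev c %| L by apply: dvdn_fact; rewrite l0 lk.
  rewrite -(divnK dv) -/(qq c).
  have := leq_mul hl (leqnn (qq c)); nia.
have s1 : n * L * #|W| <= k * \sum_(c in W) #|grp c| * qq c.
  rewrite mulnC -sum_nat_const big_distrr /=.
  apply: leq_sum => c cW; exact: hc.
have s2 : \sum_(c in W) #|grp c| * qq c = \sum_i \sum_(c in W | i \in grp c) qq c.
  under eq_bigr do rewrite -sum_nat_const.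
  under eq_bigr do rewrite big_mkcond /=.
  rewrite exchange_big /=; apply: eq_bigr => i _.
  by rewrite [RHS]big_mkcondr.
have s3 : forall i, \sum_(c in W | i \in grp c) qq c <= L * (i \in covset A W).
  move=> i.
  pose M := [set c' in W | i \in grp c'].
  case: (boolP (M == set0)) => [/eqP M0|].
    rewrite big_pred0 // => c; apply/negbTE; apply/negP => /andP [cW ig].
    have : c \in M by rewrite inE cW ig.
    by rewrite M0 inE.
  move=> /set0Pn [c0]; rewrite inE => /andP [c0W ic0].
  have cov_i : i \in covset A W.
    rewrite inE; apply/set0Pn; exists c0; rewrite inE c0W andbT.
    by have [_ _ _ ->] := ha c0 c0W.
  rewrite cov_i muln1.
  have M0 : 0 < #|M| by rewrite card_gt0; apply/set0Pn; exists c0; rewrite inE c0W ic0.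
  apply: (@leq_trans (\sum_(c in W | i \in grp c) (L %/ #|M|))).
    apply: leq_sum => c /andP [cW ic]; apply: leq_div2l => //; exact: hb.
  rewrite sum_nat_const.
  have -> : #|[pred c in W | i \in grp c]| = #|M|.
    by apply: eq_card => c; rewrite !inE.
  by rewrite mulnC leq_divM.
have s4 : \sum_i \sum_(c in W | i \in grp c) qq c <= L * cov A W.
  apply: (@leq_trans (\sum_i L * (i \in covset A W))); first by apply: leq_sum => i _; exact: s3.
  rewrite -big_distrr /= covE leq_mul2l; apply/orP; right.
  rewrite -sum1_card [X in _ <= X]big_mkcond /=; apply: leq_sum => i _; by case: (i \in covset A W).
rewrite s2 in s1.
have : L * (n * #|W|) <= L * (k * cov A W).
  have := leq_mul (leqnn k) s4; nia.
by rewrite leq_pmul2l.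
Qed.

Definition viol (l : nat) (W : {set C}) :=
  exists N' : {set 'I_n}, exists c, [/\ l * n <= #|N'| * k, c \in common A N', c \notin W &
    forall i, i \in N' -> #|A i :&: W| < l].

Lemma viol_anti l (W W' : {set C}) : W \subset W' -> viol l W' -> viol l W.
Proof.
move=> sW [N' [c [h1 h2 h3 h4]]]; exists N', c; split => //.
  by apply: contra h3; apply: (subsetP sW).
move=> i iN; apply: leq_ltn_trans (h4 i iN); apply: subset_leq_card; exact: setIS.
Qed.

Lemma step_ejr l : 0 < l <= k -> forall m (W : {set C}) lev grp, #|~: W| <= m ->
  cert W lev grp -> (forall c, c \in W -> l <= lev c) ->
  exists (W' : {set C}) lev' grp', [/\ W \subset W', cert W' lev' grp',
     (forall c, c \in W' -> l <= lev' c) & ~ viol l W'].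
Proof.
move=> /andP [l0 lk]; elim=> [|m IH] W lev grp hm hc hl.
  exists W, lev, grp; split => // -[N' [c [_ _ cW _]]].
  move: hm; rewrite leqn0 cards_eq0 => /eqP e.
  have : c \in ~: W by rewrite inE.
  by rewrite e inE.
case: (classic (viol l W)) => [[N' [c [h1 h2 h3 h4]]]|nv]; last first.
  by exists W, lev, grp; split.
pose lev1 x := if x == c then l else lev x.
pose grp1 x := if x == c then N' else grp x.
have [ha hb] := hc.
have cA : forall i, i \in N' -> c \in A i.
  by move=> i iN; move: h2; rewrite inE => /forallP /(_ i) /implyP; apply.
have m1 : #|~: (c |: W)| <= m.
  have := cardsC (c |: W); have := cardsC W; rewrite cardsU1 h3; lia.
have c1 : cert (c |: W) lev1 grp1.
  split.
      move=> x; rewrite !inE /lev1 /grp1; case: eqP => [->|_] /= xW.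
        by split => //; exact: cA.
      exact: (ha x xW).
    move=> i x xW1 ix.
    pose M1 := [set c' in c |: W | i \in grp1 c'].
    case iN: (i \in N').
      apply: (@leq_trans (#|A i :&: W|).+1).
        apply: leq_trans (_ : #|c |: (A i :&: W)| <= _).
          apply: subset_leq_card; apply/subsetP => y; rewrite !inE /grp1.
          case: eqP => [-> //|_] /= /andP [yW iy]; rewrite yW andbT.
          by have [_ _ _ ->] := ha y yW.
        by rewrite cardsU1; case: (c \notin A i :&: W).
      apply: leq_trans (h4 i iN) _.
      move: xW1; rewrite !inE /lev1; case: eqP => [_ //|_] /= xW; exact: hl.
    have xc : x != c by apply: contraFN iN => /eqP e; move: ix; rewrite /grp1 e eqxx.
    move: xW1; rewrite !inE (negbTE xc) /= => xW.
    move: ix; rewrite /grp1 /lev1 (negbTE xc) => ix.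
    apply: leq_trans (hb i x xW ix); apply: subset_leq_card; apply/subsetP => y.
    rewrite !inE /grp1; case: eqP => [->|_]; first by rewrite iN andbF.
    by [].
have l1 : forall x, x \in c |: W -> l <= lev1 x.
  move=> x; rewrite !inE /lev1; case: eqP => // _ /= xW; exact: hl.
have [W' [lev' [grp' [s1 s2 s3 s4]]]] := IH (c |: W) lev1 grp1 m1 c1 l1.
exists W', lev', grp'; split => //; apply: subset_trans s1; exact: subsetUr.
Qed.

Lemma ejr_iter d : d <= k -> exists (W : {set C}) lev grp, [/\ cert W lev grp,
  (forall c, c \in W -> k - d < lev c) & (forall l', k - d < l' <= k -> ~ viol l' W)].
Proof.
elim: d => [_|d IH dk].
  exists set0, (fun _ => 0), (fun _ => set0); split.
  - by split => [c|i c]; rewrite inE.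
  - by move=> c; rewrite inE.
  - move=> l'; lia.
have [W [lev [grp [h1 h2 h3]]]] := IH (ltnW dk).
have lk : 0 < k - d <= k by lia.
have hl : forall c, c \in W -> k - d <= lev c by move=> c cW; have := h2 c cW; lia.
have [W' [lev' [grp' [s1 s2 s3 s4]]]] := step_ejr lk (leqnn _) h1 hl.
exists W', lev', grp'; split => //.
  by move=> c cW; have := s3 c cW; lia.
move=> l' hl'.
have [e|ne] : l' = k - d \/ k - d < l' <= k by lia.
  by rewrite e.
move=> v; apply: (h3 l' ne); exact: viol_anti s1 v.
Qed.

Lemma ejr_core : 0 < k -> exists W : {set C}, EJRplus A k W /\ n * #|W| <= k * cov A W.
Proof.
move=> k0.
have [W [lev [grp [h1 _ h3]]]] := ejr_iter (leqnn k).
exists W; split; last exact: cert_bound h1.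
move=> l N' hl hsize hcom.
case: (boolP [exists i in N', l <= #|A i :&: W|]) => [/exists_inP [i iN hi]|nex].
  by left; exists i.
right; apply/subsetP => c cc; apply/negPn/negP => cW.
apply: (h3 l); first by rewrite subnn.
exists N', c; split => // i iN; rewrite ltnNge; apply/negP => hi.
by move/exists_inP: nex; apply; exists i.
Qed.

Definition violF (b : nat) (W : {set C}) :=
  exists (T : {set C}) (S : {set 'I_n}), [/\ S != set0, #|T| * n <= #|S| * k,
    (forall i, i \in S -> b <= #|A i :&: T|) & (forall i, i \in S -> #|A i :&: W| < b)].

Lemma violF_anti b (W W' : {set C}) : W \subset W' -> violF b W' -> violF b W.
Proof.
move=> sW [T [S [h1 h2 h3 h4]]]; exists T, S; split => //.
move=> i iS; apply: leq_ltn_trans (h4 i iS); apply: subset_leq_card; exact: setIS.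
Qed.

Definition certF (W : {set C}) (U : {set 'I_n}) (b : nat) :=
  [/\ n * #|W| <= k * #|U|, (forall i, i \in U -> b <= #|A i :&: W|) &
      (forall i, i \in U -> 0 < #|A i :&: W|)].

Lemma step_fjr b : 0 < b -> forall m (W : {set C}) U, #|~: U| <= m -> certF W U b ->
  exists (W' : {set C}) U', [/\ W \subset W', certF W' U' b & ~ violF b W'].
Proof.
move=> b0; elim=> [|m IH] W U hm [c1 c2 c3].
  exists W, U; split => // -[T [S [S0 _ _ h4]]].
  move: S0 => /set0Pn [i iS].
  move: hm; rewrite leqn0 cards_eq0 => /eqP e.
  have iU : i \in U.
    apply/negPn/negP => iU; have : i \in ~: U by rewrite inE.
    by rewrite e inE.
  by have := h4 i iS; have := c2 i iU; lia.
case: (classic (violF b W)) => [[T [S [S0 h2 h3 h4]]]|nv]; last by exists W, U; split.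
have SU : [disjoint S & U].
  rewrite disjoints_subset; apply/subsetP => i iS; rewrite inE; apply/negP => iU.
  by have := h4 i iS; have := c2 i iU; lia.
have cU : #|S :|: U| = #|S| + #|U|.
  have := cardsUI S U; move: SU; rewrite -setI_eq0 => /eqP ->; rewrite cards0; lia.
have m1 : #|~: (S :|: U)| <= m.
  move: S0; rewrite -card_gt0 => S0.
  have := cardsC (S :|: U); have := cardsC U; lia.
have cF : certF (W :|: T) (S :|: U) b.
  split.
  - have := cardsUI W T; rewrite cU; nia.
  - move=> i; rewrite inE => /orP [iS|iU].
      apply: leq_trans (h3 i iS) _; apply: subset_leq_card; apply: setIS; exact: subsetUr.
    apply: leq_trans (c2 i iU) _; apply: subset_leq_card; apply: setIS; exact: subsetUl.
  - move=> i; rewrite inE => /orP [iS|iU].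
      apply: leq_trans b0 (leq_trans (h3 i iS) _); apply: subset_leq_card; apply: setIS; exact: subsetUr.
    apply: leq_trans (c3 i iU) _; apply: subset_leq_card; apply: setIS; exact: subsetUl.
have [W' [U' [s1 s2 s3]]] := IH _ _ m1 cF.
exists W', U'; split => //; apply: subset_trans s1; exact: subsetUl.
Qed.

Lemma fjr_iter d : d <= k -> exists (W : {set C}) U, certF W U (k - d) /\ (forall b, k - d < b -> ~ violF b W).
Proof.
move=> dk; elim: d dk => [_|d IH dk].
  exists set0, set0; split.
    split; first by rewrite !cards0 !muln0.
      by move=> i; rewrite inE.
    by move=> i; rewrite inE.
  move=> b kb [T [S [S0 h2 h3 _]]].
  move: S0 => /set0Pn [i iS].
  have := h3 i iS.
  have : #|A i :&: T| <= #|T| by apply: subset_leq_card; exact: subsetIr.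
  have : #|S| <= n by apply: leq_trans (max_card _) _; rewrite card_ord.
  have := ltn_ord i.
  move: kb; rewrite subn0 => kb.
  move=> ni sn aT ba.
  have kT : k.+1 <= #|T| by lia.
  have := leq_mul kT (leqnn n).
  have := leq_mul (leqnn k) sn.
  lia.
have [W [U [h1 h2]]] := IH (ltnW dk).
have b0 : 0 < k - d by lia.
have [W' [U' [s1 s2 s3]]] := step_fjr b0 (leqnn _) h1.
exists W', U'; split.
  case: s2 => [x1 x2 x3]; split => // i iU; have := x2 i iU; lia.
move=> b hb.
have [e|ne] : b = k - d \/ k - d < b by lia.
  by rewrite e.
move=> v; apply: (h2 b ne); exact: violF_anti s1 v.
Qed.

Lemma fjr_core : 0 < k -> 0 < n -> exists W : {set C}, FJR A k W /\ n * #|W| <= k * cov A W.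
Proof.
move=> k0 n0.
have [W [U [[c1 _ c3] h2]]] := fjr_iter (leqnn k).
exists W; split.
  move=> b T S b0 [S0 [hTS hb]].
  case: (boolP [exists i in S, b <= #|A i :&: W|]) => [/exists_inP [i iS hi]|nex].
    by exists i.
  exfalso; apply: (h2 b); first by rewrite subnn.
  exists T, S; split => // i iS; rewrite ltnNge; apply/negP => hi.
  by move/exists_inP: nex; apply; exists i.
apply: leq_trans c1 _; rewrite leq_mul2l; apply/orP; right.
rewrite covE; apply: subset_leq_card; apply/subsetP => i iU.
by rewrite inE -card_gt0; exact: c3.
Qed.


End EJR.

Lemma ejr_mono (C : finType) (n : nat) (A : 'I_n -> {set C}) (k : nat) (W W' : {set C}) :
  W \subset W' -> EJRplus A k W -> EJRplus A k W'.
Proof.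
move=> sW h l N' hl hs hc; case: (h l N' hl hs hc) => [[i iN hi]|hsub].
  left; exists i => //; apply: leq_trans hi _; apply: subset_leq_card; exact: setIS.
by right; apply: subset_trans hsub sW.
Qed.

Lemma fjr_mono (C : finType) (n : nat) (A : 'I_n -> {set C}) (k : nat) (W W' : {set C}) :
  W \subset W' -> FJR A k W -> FJR A k W'.
Proof.
move=> sW h b T S b0 hw; have [i iS hi] := h b T S b0 hw.
exists i => //; apply: leq_trans hi _; apply: subset_leq_card; exact: setIS.
Qed.

Theorem corollary4 (C : finType) (n : nat) (A : 'I_n -> {set C}) (k : nat) :
  0 < #|C| -> 0 < n -> 1 <= k <= #|C| ->
  exists W W' : {set C},
    (#|W| <= k /\ ratio_ge_3_4 A k W /\ EJRplus A k W) /\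
    (#|W'| <= k /\ ratio_ge_3_4 A k W' /\ FJR A k W').
Proof.
move=> C0 n0 hk; have k0 : 0 < k by case/andP: hk.
have [W0 [e1 e2]] := @ejr_core C n A k k0.
have [F0 [f1 f2]] := @fjr_core C n A k k0 n0.
have [W [s1 s2 s3]] := @extend C n A k W0 n0 hk e2.
have [W' [t1 t2 t3]] := @extend C n A k F0 n0 hk f2.
exists W, W'; split; split => //; split => //.
- exact: ejr_mono s1 e1.
- exact: fjr_mono t1 f1.
Qed.
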